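(* Let $2<p<\frac{10}{3}$, $\lambda_3<0$, and let $(a_1,r_1)\in(0,\bar a)\times(0,+\infty)$ satisfy $g(a_1,r_1)\ge0$. Then for any $a_2\in(0,a_1]$ one has $g(a_2,r_2)\ge0$ for every $r_2\in\left[\frac{a_2}{a_1}r_1,\,r_1\right]$.
   Context: $\Lambda:=\max\{|\lambda_1-\frac{4\pi}{3}\lambda_2|,|\lambda_1+\frac{8\pi}{3}\lambda_2|\}>0$ for given real $\lambda_1,\lambda_2$. For $q\in(2,6)$, $\gamma_q:=\frac{3(q-2)}{2q}$ and $C_q>0$ is a Gagliardo–Nirenberg constant: $\|u\|_q\le C_q\|\nabla u\|_2^{\gamma_q}\|u\|_2^{1-\gamma_q}$ for $u\in H^1(\mathbb{R}^3)$. $g(a,r):=\frac12-\frac{\Lambda}{2}C_4^4ra-\frac{2|\lambda_3|}{p}C_p^pa^{p(1-\gamma_p)}r^{p\gamma_p-2}$ for $a,r>0$. $\bar a:=(1/(2\alpha))^{3/4}$ with $\alpha:=\frac12(\Lambda C_4^4)^{\frac{p\gamma_p-2}{p\gamma_p-3}}\left(\frac{4|\lambda_3|(2-p\gamma_p)C_p^p}{p}\right)^{\frac{1}{3-p\gamma_p}}+2\left(\frac{C_p^p|\lambda_3|}{p}\right)^{\frac{1}{3-p\gamma_p}}\left(\frac{4(2-p\gamma_p)}{\Lambda C_4^4}\right)^{\frac{p\gamma_p-2}{3-p\gamma_p}}$. *)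

(* Defs.v *)
From Stdlib Require Import Reals.
Open Scope R_scope.

Definition gammaq (q : R) : R := 3 * (q - 2) / (2 * q).

Definition Lambda (l1 l2 : R) : R :=
  Rmax (Rabs (l1 - 4 * PI / 3 * l2)) (Rabs (l1 + 8 * PI / 3 * l2)).

Definition gfun (Lam C4 Cp p l3 a r : R) : R :=
  1 / 2 - Lam / 2 * C4 ^ 4 * r * a
  - 2 * Rabs l3 / p * Rpower Cp p * Rpower a (p * (1 - gammaq p))
      * Rpower r (p * gammaq p - 2).

Definition alphac (Lam C4 Cp p l3 : R) : R :=
  let pg := p * gammaq p in
  1 / 2 * Rpower (Lam * C4 ^ 4) ((pg - 2) / (pg - 3))
        * Rpower (4 * Rabs l3 * (2 - pg) * Rpower Cp p / p) (1 / (3 - pg))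
  + 2 * Rpower (Rpower Cp p * Rabs l3 / p) (1 / (3 - pg))
      * Rpower (4 * (2 - pg) / (Lam * C4 ^ 4)) ((pg - 2) / (3 - pg)).

Definition abar (Lam C4 Cp p l3 : R) : R :=
  Rpower (1 / (2 * alphac Lam C4 Cp p l3)) (3 / 4).

(* Main.v *)
Require Import Defs.
From Stdlib Require Import Reals Lra Psatz.
Open Scope R_scope.

Theorem lemma2p5 (l1 l2 l3 C4 Cp p a1 r1 : R) :
  0 < Lambda l1 l2 ->
  0 < C4 -> 0 < Cp ->
  2 < p -> p < 10 / 3 -> l3 < 0 ->
  0 < a1 -> a1 < abar (Lambda l1 l2) C4 Cp p l3 -> 0 < r1 ->
  0 <= gfun (Lambda l1 l2) C4 Cp p l3 a1 r1 ->
  forall a2 : R, 0 < a2 -> a2 <= a1 ->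
  forall r2 : R, a2 / a1 * r1 <= r2 -> r2 <= r1 ->
  0 <= gfun (Lambda l1 l2) C4 Cp p l3 a2 r2.
Proof.
  intros HL HC4 HCp Hp1 Hp2 Hl3 Ha1 _ Hr1 Hg a2 Ha2 Ha21 r2 Hr2a Hr2b.
  unfold gfun in *.
  set (L := Lambda l1 l2) in *.
  set (e1 := p * (1 - gammaq p)) in *.
  set (e2 := p * gammaq p - 2) in *.
  assert (He2 : e2 < 0).
  { unfold e2, gammaq. replace (p * (3 * (p - 2) / (2 * p))) with (3 * (p-2)/2)
      by (field; lra). lra. }
  assert (He12 : e1 + e2 = p - 2) by (unfold e1, e2; ring).
  assert (Hq : 0 < a2 / a1 * r1).
  { apply Rmult_lt_0_compat; [apply Rdiv_lt_0_compat|]; lra. }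
  assert (Hr2 : 0 < r2) by lra.
  assert (H1 : ln a2 <= ln a1).
  { destruct (Rle_lt_or_eq_dec _ _ Ha21) as [h|h]; [left; apply ln_increasing; lra | rewrite h; lra]. }
  assert (H2 : ln (a2 / a1 * r1) <= ln r2).
  { destruct (Rle_lt_or_eq_dec _ _ Hr2a) as [h|h]; [left; apply ln_increasing; lra | rewrite h; lra]. }
  rewrite ln_mult in H2 by (try apply Rdiv_lt_0_compat; lra).
  unfold Rdiv in H2. rewrite ln_mult in H2 by (try apply Rinv_0_lt_compat; lra).
  rewrite ln_Rinv in H2 by lra.
  assert (Hexp : Rpower a2 e1 * Rpower r2 e2 <= Rpower a1 e1 * Rpower r1 e2).
  { unfold Rpower. rewrite <- !exp_plus.
    destruct (Rle_lt_or_eq_dec (e1 * ln a2 + e2 * ln r2) (e1 * ln a1 + e2 * ln r1)) as [h|h].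
    - assert (e2 * ln r2 <= e2 * (ln a2 + - ln a1 + ln r1)) by nra.
      assert ((e1 + e2) * ln a2 <= (e1+e2) * ln a1) by nra.
      nra.
    - left; apply exp_increasing; exact h.
    - rewrite h; lra. }
  assert (HB : 0 <= 2 * Rabs l3 / p * Rpower Cp p).
  { unfold Rpower. pose proof (exp_pos (p * ln Cp)). pose proof (Rabs_pos l3).
    apply Rmult_le_pos; [|lra]. apply Rmult_le_pos; [lra|]. left; apply Rinv_0_lt_compat; lra. }
  assert (HA : L / 2 * C4 ^ 4 * r2 * a2 <= L / 2 * C4 ^ 4 * r1 * a1).
  { assert (0 < L / 2 * C4 ^ 4) by (apply Rmult_lt_0_compat; [lra| apply pow_lt; lra]).
    assert (r2 * a2 <= r1 * a1) by nra. nra. }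
  set (B := 2 * Rabs l3 / p * Rpower Cp p) in *.
  assert (B * Rpower a2 e1 * Rpower r2 e2 <= B * Rpower a1 e1 * Rpower r1 e2).
  { rewrite !Rmult_assoc. apply Rmult_le_compat_l; lra. }
  lra.
Qed.
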